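(* Let $\beta_\bullet\in\{\beta,\beta_v\}$ and let $N$ be $\to_{\beta_\bullet}$-normal. For every term $M$: $M\to_{\beta_\bullet}^*N$ if and only if $M\rightsquigarrow_{pd}^*N$.
   Context: Terms $\Lambda_{\mathcal O}$: $M::=x\mid\lambda x.M\mid MM\mid\mathsf{op}(M,\dots,M)$ with $\mathsf{op}$ in a (possibly empty) set $\mathcal O$ of operator symbols with fixed arities; values $V::=x\mid\lambda x.M$. Rules $(\lambda x.M)N\mapsto_\beta M\{N/x\}$, $(\lambda x.M)V\mapsto_{\beta_v}M\{V/x\}$; $\to=\to_{\beta_\bullet}$ is the closure under all contexts (including under $\lambda$ and operators). Surface reduction $\to_s$: for $\beta$, closure of $\beta$ under head contexts $H::=[\,]\mid\lambda x.H\mid HM$; for $\beta_v$, closure of $\beta_v$ under weak contexts $W::=[\,]\mid WM\mid MW$. Parallel reduction $\rightsquigarrow_{pd}$: (1) if $M\to_sM'$ then $M\rightsquigarrow_{pd}M'$; (2) if $M$ is $\to$-normal then $M\rightsquigarrow_{pd}M$; (3) otherwise (M is $\to_s$-normal but not $\to$-normal): $\lambda x.P\rightsquigarrow_{pd}\lambda x.P'$ if $P\rightsquigarrow_{pd}P'$; $P_1P_2\rightsquigarrow_{pd}P_1'P_2'$ if $P_1\rightsquigarrow_{pd}P_1'$ and $P_2\rightsquigarrow_{pd}P_2'$; $\mathsf{op}(P_1,\dots,P_k)\rightsquigarrow_{pd}\mathsf{op}(P_1',\dots,P_k')$ if $P_i\rightsquigarrow_{pd}P_i'$ for all $i$. 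*)

(* Defs.v *)
From Stdlib Require Import List Arith Relations.
Import ListNotations.
Set Implicit Arguments.

Section Terms.
Variable O : Type.

Inductive term : Type :=
| Var : nat -> term
| Lam : term -> term
| App : term -> term -> term
| Op  : O -> list term -> term.

Fixpoint wf (ar : O -> nat) (t : term) : Prop :=
  match t with
  | Var _ => True
  | Lam u => wf ar u
  | App u v => wf ar u /\ wf ar v
  | Op o ts => length ts = ar o /\
      (fix wfl (l : list term) : Prop :=
         match l with [] => True | u :: l' => wf ar u /\ wfl l' end) ts
  end.

Fixpoint lift (d k : nat) (t : term) : term :=
  match t with
  | Var n => if k <=? n then Var (n + d) else Var n
  | Lam u => Lam (lift d (S k) u)
  | App u v => App (lift d k u) (lift d k v)
  | Op o ts => Op o (map (lift d k) ts)
  end.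

Fixpoint subst (k : nat) (N : term) (t : term) : term :=
  match t with
  | Var n => if n =? k then lift k 0 N
             else if k <? n then Var (pred n) else Var n
  | Lam u => Lam (subst (S k) N u)
  | App u v => App (subst k N u) (subst k N v)
  | Op o ts => Op o (map (subst k N) ts)
  end.

Definition is_value (t : term) : Prop :=
  match t with Var _ | Lam _ => True | _ => False end.

End Terms.

Arguments Var {O} _.

Inductive calculus := CBN | CBV.

Inductive root {O} : calculus -> term O -> term O -> Prop :=
| root_beta : forall M N, root CBN (App (Lam M) N) (subst 0 N M)
| root_betav : forall M V, is_value V -> root CBV (App (Lam M) V) (subst 0 V M).

Inductive one_step {A} (R : A -> A -> Prop) : list A -> list A -> Prop :=
| one_hd : forall x y l, R x y -> one_step R (x :: l) (y :: l)
| one_tl : forall x l l', one_step R l l' -> one_step R (x :: l) (x :: l').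

Inductive step {O} (c : calculus) : term O -> term O -> Prop :=
| step_root : forall M N, root c M N -> step c M N
| step_lam : forall M M', step c M M' -> step c (Lam M) (Lam M')
| step_appl : forall M M' N, step c M M' -> step c (App M N) (App M' N)
| step_appr : forall M N N', step c N N' -> step c (App M N) (App M N')
| step_op : forall o ts ts', one_step (step c) ts ts' -> step c (Op o ts) (Op o ts').

(* surface reduction: head contexts H ::= [] | \x.H | H M for beta,
   weak contexts W ::= [] | W M | M W for beta_v *)
Inductive sstep {O} (c : calculus) : term O -> term O -> Prop :=
| sstep_root : forall M N, root c M N -> sstep c M N
| sstep_lam : forall M M', c = CBN -> sstep c M M' -> sstep c (Lam M) (Lam M')
| sstep_appl : forall M M' N, sstep c M M' -> sstep c (App M N) (App M' N)
| sstep_appr : forall M N N', c = CBV -> sstep c N N' -> sstep c (App M N) (App M N').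

Definition normal {O} (c : calculus) (M : term O) : Prop := forall M', ~ step c M M'.
Definition snormal {O} (c : calculus) (M : term O) : Prop := forall M', ~ sstep c M M'.

Inductive pd {O} (c : calculus) : term O -> term O -> Prop :=
| pd_surf : forall M M', sstep c M M' -> pd c M M'
| pd_norm : forall M, normal c M -> pd c M M
| pd_lam : forall P P', snormal c (Lam P) -> ~ normal c (Lam P) ->
    pd c P P' -> pd c (Lam P) (Lam P')
| pd_app : forall P1 P2 P1' P2', snormal c (App P1 P2) -> ~ normal c (App P1 P2) ->
    pd c P1 P1' -> pd c P2 P2' -> pd c (App P1 P2) (App P1' P2')
| pd_op : forall o Ps Ps', snormal c (Op o Ps) -> ~ normal c (Op o Ps) ->
    Forall2 (pd c) Ps Ps' -> pd c (Op o Ps) (Op o Ps').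

(* Main.v *)
Require Import Defs.
From Stdlib Require Import List Arith Relations Lia Classical.
Import ListNotations.

Section S.
Variable O : Type.
Notation tm := (term O).
Notation rt := (clos_refl_trans tm).

Definition term_ind' (P : tm -> Prop) (HV : forall n, P (Var n))
  (HL : forall t, P t -> P (Lam t)) (HA : forall t u, P t -> P u -> P (App t u))
  (HO : forall o ts, Forall P ts -> P (Op o ts)) : forall t, P t :=
  fix F t := match t with
  | Var n => HV n
  | Lam u => HL u (F u)
  | App u v => HA u v (F u) (F v)
  | Op o ts => HO o ts ((fix G l := match l as l return Forall P l with
                 | nil => @Forall_nil _ P
                 | cons x l' => @Forall_cons _ P x l' (F x) (G l') end) ts)
  end.

Ltac dec := repeat (cbn [lift subst]; match goal with
  | |- context [?a =? ?b] => destruct (Nat.eqb_spec a b)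
  | |- context [?a <? ?b] => destruct (Nat.ltb_spec a b)
  | |- context [?a <=? ?b] => destruct (Nat.leb_spec a b)
  end); cbn [lift subst]; try (f_equal; lia); try lia.

Ltac opcase IH := simpl; f_equal; rewrite ?map_map; apply map_ext_in; intros ? Hin;
  rewrite Forall_forall in IH; apply IH; auto; try lia.

Lemma lift_lift_perm : forall (W : tm) i k d j, i <= k ->
  lift d (k + j) (lift j i W) = lift j i (lift d k W).
Proof.
  induction W as [n|W IH|W1 IH1 W2 IH2|o ts IH] using term_ind'; intros i k d j Hik.
  - dec.
  - simpl; f_equal; apply (IH (S i) (S k)); lia.
  - simpl; f_equal; auto.
  - opcase IH.
Qed.

Lemma lift_lift_comp : forall (W : tm) i j k l, l <= i <= l + k ->
  lift j i (lift k l W) = lift (j + k) l W.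
Proof.
  induction W as [n|W IH|W1 IH1 W2 IH2|o ts IH] using term_ind'; intros i j k l Hi.
  - dec.
  - simpl; f_equal; apply IH; lia.
  - simpl; f_equal; auto.
  - opcase IH.
Qed.

Lemma lift_subst : forall (A W : tm) d k j,
  lift d (j + k) (subst j W A) = subst j (lift d k W) (lift d (S (j + k)) A).
Proof.
  induction A as [n|A IH|A1 IH1 A2 IH2|o ts IH] using term_ind'; intros W d k j.
  - dec. subst. rewrite Nat.add_comm. apply lift_lift_perm. lia.
  - simpl; f_equal; apply (IH W d k (S j)).
  - simpl; f_equal; auto.
  - opcase IH.
Qed.

Lemma subst_lift_cancel : forall (N X : tm) i j m, i <= j <= i + m ->
  subst j X (lift (S m) i N) = lift m i N.
Proof.
  induction N as [n|A IH|A1 IH1 A2 IH2|o ts IH] using term_ind'; intros X i j m Hi.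
  - dec.
  - simpl; f_equal; apply IH; lia.
  - simpl; f_equal; auto.
  - opcase IH.
Qed.

Lemma subst_lift_comm : forall (W N : tm) i j k, i <= k ->
  subst (j + k) N (lift j i W) = lift j i (subst k N W).
Proof.
  induction W as [n|A IH|A1 IH1 A2 IH2|o ts IH] using term_ind'; intros N i j k Hik.
  - dec. subst. rewrite lift_lift_comp by lia. reflexivity.
  - simpl; f_equal. replace (S (j + k)) with (j + S k) by lia. apply IH; lia.
  - simpl; f_equal; auto.
  - opcase IH.
Qed.

Lemma subst_subst : forall (A W N : tm) j k,
  subst (j + k) N (subst j W A) = subst j (subst k N W) (subst (S (j + k)) N A).
Proof.
  induction A as [n|A IH|A1 IH1 A2 IH2|o ts IH] using term_ind'; intros W N j k.
  - dec.
    + subst. rewrite (subst_lift_comm W N 0 j k) by lia. reflexivity.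
    + replace (pred n) with (j + k) by lia. rewrite subst_lift_cancel by lia. reflexivity.
  - simpl; f_equal; apply (IH W N (S j) k).
  - simpl; f_equal; auto.
  - opcase IH.
Qed.


Lemma lift_subst0 (A W : tm) d k :
  lift d k (subst 0 W A) = subst 0 (lift d k W) (lift d (S k) A).
Proof. exact (lift_subst A W d k 0). Qed.

Lemma subst_subst0 (A W N : tm) k :
  subst k N (subst 0 W A) = subst 0 (subst k N W) (subst (S k) N A).
Proof. exact (subst_subst A W N 0 k). Qed.

Lemma is_value_lift (V : tm) d k : is_value V -> is_value (lift d k V).
Proof. destruct V; simpl; auto. destruct (k <=? n); simpl; auto. Qed.

Lemma is_value_subst (V N : tm) k : is_value V -> is_value N -> is_value (subst k N V).
Proof.
  destruct V; simpl; auto. intros _ HN. destruct (n =? k).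
  apply is_value_lift; auto. destruct (k <? n); simpl; auto.
Qed.

Lemma rt_map (f : tm -> tm) (R R' : tm -> tm -> Prop) :
  (forall x y, R x y -> R' (f x) (f y)) -> forall x y, rt R x y -> rt R' (f x) (f y).
Proof. intros H x y Hr; induction Hr; [apply rt_step; auto | apply rt_refl | eapply rt_trans; eauto]. Qed.

Lemma rt_incl (R R' : tm -> tm -> Prop) :
  (forall x y, R x y -> R' x y) -> forall x y, rt R x y -> rt R' x y.
Proof. intros H x y Hr; induction Hr; [apply rt_step; auto | apply rt_refl | eapply rt_trans; eauto]. Qed.

Lemma sstep_lift c (M M' : tm) : sstep c M M' -> forall d k, sstep c (lift d k M) (lift d k M').
Proof.
  induction 1; intros d k; simpl.
  - inversion H; subst; simpl; rewrite lift_subst0; constructor; constructor.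
    apply is_value_lift; auto.
  - apply sstep_lam; auto.
  - apply sstep_appl; auto.
  - apply sstep_appr; auto.
Qed.

Lemma sstep_subst c (M M' : tm) : sstep c M M' -> forall N k, (c = CBV -> is_value N) ->
  sstep c (subst k N M) (subst k N M').
Proof.
  induction 1; intros N0 k HV; simpl.
  - inversion H; subst; simpl; rewrite subst_subst0; constructor; constructor.
    apply is_value_subst; auto.
  - apply sstep_lam; auto.
  - apply sstep_appl; auto.
  - apply sstep_appr; auto.
Qed.

Inductive st (c : calculus) : tm -> tm -> Prop :=
| st_var : forall M n, rt (sstep c) M (Var n) -> st c M (Var n)
| st_lam : forall M P P', rt (sstep c) M (Lam P) -> st c P P' -> st c M (Lam P')
| st_app : forall M P Q P' Q', rt (sstep c) M (App P Q) -> st c P P' -> st c Q Q' ->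
    st c M (App P' Q')
| st_op : forall M o Ps Ps', rt (sstep c) M (Op o Ps) -> stl c Ps Ps' -> st c M (Op o Ps')
with stl (c : calculus) : list tm -> list tm -> Prop :=
| stl_nil : stl c nil nil
| stl_cons : forall P P' Ps Ps', st c P P' -> stl c Ps Ps' -> stl c (P :: Ps) (P' :: Ps').

Scheme st_mut := Minimality for st Sort Prop
with stl_mut := Minimality for stl Sort Prop.

Lemma st_pre c (M X Y : tm) : rt (sstep c) M X -> st c X Y -> st c M Y.
Proof.
  intros H1 H2; destruct H2.
  - apply st_var; eapply rt_trans; eauto.
  - eapply st_lam; [eapply rt_trans; eauto | eauto].
  - eapply st_app; [eapply rt_trans; eauto | eauto | eauto].
  - eapply st_op; [eapply rt_trans; eauto | eauto].
Qed.

Lemma st_refl c : forall M : tm, st c M M.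
Proof.
  induction M as [n|A IH|A1 IH1 A2 IH2|o ts IH] using term_ind'.
  - apply st_var, rt_refl.
  - eapply st_lam; [apply rt_refl | auto].
  - eapply st_app; [apply rt_refl | auto | auto].
  - eapply st_op; [apply rt_refl |]. induction IH; constructor; auto.
Qed.

Lemma st_lift c : forall M M' : tm, st c M M' -> forall d k, st c (lift d k M) (lift d k M').
Proof.
  apply (st_mut c (fun M M' => forall d k, st c (lift d k M) (lift d k M'))
                  (fun l l' => forall d k, stl c (map (lift d k) l) (map (lift d k) l'))).
  - intros M n H d k. eapply st_pre. apply (rt_map (lift d k) (sstep c) (sstep c)); [intros; apply sstep_lift; auto | exact H].
    apply st_refl.
  - intros M P P' H _ IH d k. simpl. eapply st_lam; [| apply IH].
    apply (rt_map (lift d k) (sstep c) (sstep c) (fun x y h => sstep_lift c x y h d k) _ _ H).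
  - intros M P Q P' Q' H _ IH1 _ IH2 d k. simpl. eapply st_app; [| apply IH1 | apply IH2].
    apply (rt_map (lift d k) (sstep c) (sstep c) (fun x y h => sstep_lift c x y h d k) _ _ H).
  - intros M o Ps Ps' H _ IH d k. simpl. eapply st_op; [| apply IH].
    apply (rt_map (lift d k) (sstep c) (sstep c) (fun x y h => sstep_lift c x y h d k) _ _ H).
  - intros; constructor.
  - intros; simpl; constructor; auto.
Qed.

Lemma st_subst c : forall M M' : tm, st c M M' -> forall k N N', st c N N' ->
  (c = CBV -> is_value N) -> st c (subst k N M) (subst k N' M').
Proof.
  apply (st_mut c (fun M M' => forall k N N', st c N N' ->
  (c = CBV -> is_value N) -> st c (subst k N M) (subst k N' M'))
    (fun l l' => forall k N N', st c N N' ->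
  (c = CBV -> is_value N) -> stl c (map (subst k N) l) (map (subst k N') l'))).
  - intros M n H k N N' HN HV. eapply st_pre.
    apply (rt_map (subst k N) (sstep c) (sstep c) (fun x y h => sstep_subst c x y h N k HV) _ _ H).
    simpl. destruct (n =? k). apply st_lift; auto. apply st_refl.
  - intros M P P' H _ IH k N N' HN HV. simpl. eapply st_lam; [| apply IH; eauto].
    apply (rt_map (subst k N) (sstep c) (sstep c) (fun x y h => sstep_subst c x y h N k HV) _ _ H).
  - intros M P Q P' Q' H _ IH1 _ IH2 k N N' HN HV. simpl. eapply st_app; [| apply IH1; eauto | apply IH2; eauto].
    apply (rt_map (subst k N) (sstep c) (sstep c) (fun x y h => sstep_subst c x y h N k HV) _ _ H).
  - intros M o Ps Ps' H _ IH k N N' HN HV. simpl. eapply st_op; [| apply IH; eauto].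
    apply (rt_map (subst k N) (sstep c) (sstep c) (fun x y h => sstep_subst c x y h N k HV) _ _ H).
  - intros; constructor.
  - intros; simpl; constructor; eauto.
Qed.

Lemma st_value c (Q Q' : tm) : st c Q Q' -> is_value Q' ->
  exists Q0, rt (sstep c) Q Q0 /\ is_value Q0 /\ st c Q0 Q'.
Proof.
  intros H HV; destruct H; simpl in HV; try contradiction.
  - exists (Var n); repeat split; auto. apply st_refl.
  - exists (Lam P); repeat split; auto. eapply st_lam; [apply rt_refl | auto].
Qed.

Lemma st_step c : forall M N : tm, st c M N -> forall N', step c N N' -> st c M N'.
Proof.
  apply (st_mut c (fun M N => forall N', step c N N' -> st c M N')
     (fun l l' => forall l'', one_step (step c) l' l'' -> stl c l l'')).
  - intros M n H N' HS. inversion HS; subst. inversion H0.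
  - intros M P P' H HP IH N' HS. inversion HS; subst.
    + inversion H0.
    + eapply st_lam; eauto.
  - intros M P Q P' Q' H HP IH1 HQ IH2 N' HS. inversion HS; subst.
    + inversion H0; subst.
      * inversion HP; subst. eapply st_pre; [| apply st_subst; [eauto | eauto | discriminate]].
        eapply rt_trans; [exact H|]. eapply rt_trans.
        apply (rt_map (fun x => App x Q) (sstep CBN) (sstep CBN) (fun x y h => sstep_appl Q h) _ _ ltac:(eassumption)).
        apply rt_step. constructor. constructor.
      * assert (Hv : is_value Q') by assumption. inversion HP; subst.
        destruct (st_value _ _ _ HQ Hv) as [Q0 [HQ0 [HV0 HQ0']]].
        match goal with Hr : rt (sstep CBV) P (Lam ?A) |- _ => rename Hr into HPr; rename A into P0 end.
        eapply st_pre; [| apply st_subst; [eauto | eauto | auto]].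
        eapply rt_trans; [exact H|]. eapply rt_trans.
        apply (rt_map (fun x => App x Q) (sstep CBV) (sstep CBV) (fun x y h => sstep_appl Q h) _ _ HPr).
        eapply rt_trans.
        apply (rt_map (fun x => App (Lam P0) x) (sstep CBV) (sstep CBV) (fun x y h => sstep_appr (Lam P0) eq_refl h) _ _ HQ0).
        apply rt_step. constructor. constructor. auto.
    + eapply st_app; eauto.
    + eapply st_app; eauto.
  - intros M o Ps Ps' H HP IH N' HS. inversion HS; subst.
    + inversion H0.
    + eapply st_op; eauto.
  - intros l'' H. inversion H.
  - intros P P' Ps Ps' HP IH HPs IHs l'' H. inversion H; subst; constructor; auto.
Qed.

Lemma rt_step_st c (M N : tm) : rt (step c) M N -> st c M N.
Proof.
  intros H. apply clos_rt_rtn1_iff in H. induction H.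
  - apply st_refl.
  - eapply st_step; eauto.
Qed.

Lemma sstep_step c (M M' : tm) : sstep c M M' -> step c M M'.
Proof. induction 1; [apply step_root | apply step_lam | apply step_appl | apply step_appr]; auto. Qed.

Lemma normal_snormal c (M : tm) : normal c M -> snormal c M.
Proof. intros H X HX; apply (H X), sstep_step, HX. Qed.

Lemma normal_app c (P Q : tm) : normal c (App P Q) -> normal c P /\ normal c Q.
Proof. intros H; split; intros X HX; [apply (H (App X Q)), step_appl | apply (H (App P X)), step_appr]; auto. Qed.

Lemma normal_lam c (P : tm) : normal c (Lam P) -> normal c P.
Proof. intros H X HX; apply (H (Lam X)), step_lam; auto. Qed.

Lemma one_step_app (R : tm -> tm -> Prop) l1 x y l2 : R x y -> one_step R (l1 ++ x :: l2) (l1 ++ y :: l2).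
Proof. intros H; induction l1; simpl; constructor; auto. Qed.

Lemma normal_op c o (Ps : list tm) : normal c (Op o Ps) -> Forall (normal c) Ps.
Proof.
  intros H. apply Forall_forall. intros P HIn X HX.
  apply in_split in HIn. destruct HIn as [l1 [l2 ->]].
  apply (H (Op o (l1 ++ X :: l2))). apply step_op, one_step_app; auto.
Qed.

Lemma pd_normal_eq c (M M' : tm) : pd c M M' -> normal c M -> M' = M.
Proof. intros H HN; destruct H; try contradiction; auto. exfalso; eapply HN, sstep_step; eauto. Qed.

Lemma pd_nsn c (M M' : tm) : pd c M M' -> ~ snormal c M -> sstep c M M'.
Proof. intros H HN; destruct H; try contradiction; auto. exfalso; apply HN, normal_snormal; auto. Qed.

Lemma not_snormal c (M : tm) : ~ snormal c M -> exists M', sstep c M M'.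
Proof. intros H. apply NNPP. intro H2. apply H. intros X HX. apply H2. eauto. Qed.

Inductive pdn (c : calculus) : nat -> tm -> tm -> Prop :=
| pdn0 : forall M, pdn c 0 M M
| pdnS : forall n M M1 N, pd c M M1 -> pdn c n M1 N -> pdn c (S n) M N.

Lemma pdn_normal_eq c n (M N : tm) : pdn c n M N -> normal c M -> N = M.
Proof.
  induction 1; auto. intros HN. pose proof (pd_normal_eq _ _ _ H HN); subst. auto.
Qed.

Lemma pdn_normal_refl c (M : tm) : normal c M -> forall n, pdn c n M M.
Proof. intros H n; induction n; econstructor; eauto. apply pd_norm; auto. Qed.

Lemma pdn_pad c n (M N : tm) : pdn c n M N -> normal c N -> forall m, n <= m -> pdn c m M N.
Proof.
  induction 1; intros HN m Hm.
  - apply pdn_normal_refl; auto.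
  - destruct m; [lia|]. econstructor; eauto. apply IHpdn; auto; lia.
Qed.

Lemma rt_pdn c (M N : tm) : rt (pd c) M N -> exists n, pdn c n M N.
Proof.
  intros H; apply clos_rt_rt1n_iff in H; induction H.
  - exists 0; constructor.
  - destruct IHclos_refl_trans_1n as [n Hn]; exists (S n); econstructor; eauto.
Qed.

Lemma pdn_rt c n (M N : tm) : pdn c n M N -> rt (pd c) M N.
Proof. induction 1; [apply rt_refl | eapply rt_trans; [apply rt_step|]; eauto]. Qed.

Lemma pd_lam_shape c (A M : tm) : pd c (Lam A) M -> exists B, M = Lam B.
Proof.
  intros H; inversion H; subst; eauto.
  match goal with H : sstep _ _ _ |- _ => inversion H; subst; eauto end.
  match goal with H : root _ _ _ |- _ => inversion H end.
Qed.

Lemma pdn_lam_shape c n (A N : tm) : pdn c n (Lam A) N -> exists B, N = Lam B.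
Proof.
  intros H; remember (Lam A) as L; revert A HeqL; induction H; intros; subst; eauto.
  destruct (pd_lam_shape _ _ _ H) as [B ->]; eauto.
Qed.

Lemma pd_value c (V M : tm) : pd c V M -> is_value V -> is_value M.
Proof.
  intros H HV; destruct V; simpl in HV; try contradiction.
  - inversion H; subst; simpl; auto.
    match goal with H : sstep _ _ _ |- _ => inversion H; subst end.
    match goal with H : root _ _ _ |- _ => inversion H end.
  - destruct (pd_lam_shape _ _ _ H) as [B ->]; simpl; auto.
Qed.

Lemma pdn_value c n (V N : tm) : pdn c n V N -> is_value V -> is_value N.
Proof. induction 1; auto. intros; apply IHpdn; eapply pd_value; eauto. Qed.

Lemma lam_comb c : forall n (P N : tm), pdn c n P N -> normal c (Lam N) -> rt (pd c) (Lam P) (Lam N).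
Proof.
  induction 1 as [|n P P1 N HP Hn IH]; intros HN; [apply rt_refl|].
  destruct (classic (normal c (Lam P))) as [Hnm|Hnm].
  - pose proof (pd_normal_eq _ _ _ HP (normal_lam _ _ Hnm)); subst. auto.
  - destruct (classic (snormal c (Lam P))) as [Hs|Hs].
    + eapply rt_trans; [apply rt_step, pd_lam; eauto | auto].
    + destruct (not_snormal _ _ Hs) as [X HX]. inversion HX; subst.
      * match goal with H : root _ _ _ |- _ => inversion H end.
      * assert (~ snormal CBN P) by (intros Hc; eapply Hc; eauto).
        eapply rt_trans; [apply rt_step, pd_surf, sstep_lam; [reflexivity | apply pd_nsn; [exact HP | auto]] | auto].
Qed.

Lemma pdn_next c a (P N : tm) : pdn c a P N -> normal c N ->
  (a = 0 /\ P = N) \/ (exists P1 a1, a = S a1 /\ pd c P P1 /\ pdn c a1 P1 N).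
Proof. intros H _; destruct H; eauto 10. Qed.

Lemma app_comb c (N1 N2 : tm) : normal c (App N1 N2) -> forall s a b P Q, a + b <= s ->
  pdn c a P N1 -> pdn c b Q N2 -> rt (pd c) (App P Q) (App N1 N2).
Proof.
  intros HN. destruct (normal_app _ _ _ HN) as [HN1 HN2].
  induction s; intros a b P Q Hs HP HQ.
  - assert (a = 0) by lia; assert (b = 0) by lia; subst.
    inversion HP; inversion HQ; subst; apply rt_refl.
  - destruct (classic (normal c (App P Q))) as [Hnm|Hnm].
    + destruct (normal_app _ _ _ Hnm).
      rewrite (pdn_normal_eq _ _ _ _ HP), (pdn_normal_eq _ _ _ _ HQ) by auto. apply rt_refl.
    + destruct (classic (snormal c (App P Q))) as [Hs'|Hs'].
      * destruct (pdn_next _ _ _ _ HP HN1) as [[-> ->]|[P1 [a1 [-> [HP1 HP1']]]]];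
        destruct (pdn_next _ _ _ _ HQ HN2) as [[-> ->]|[Q1 [b1 [-> [HQ1 HQ1']]]]].
        -- contradiction.
        -- eapply rt_trans; [apply rt_step, pd_app; eauto; apply pd_norm; auto|].
           apply (IHs 0 b1); auto; first [lia | apply pdn0 | assumption].
        -- eapply rt_trans; [apply rt_step, pd_app; eauto; apply pd_norm; auto|].
           apply (IHs a1 0); auto; first [lia | apply pdn0 | assumption].
        -- eapply rt_trans; [apply rt_step, pd_app; eauto|].
           apply (IHs a1 b1); auto; lia.
      * destruct (not_snormal _ _ Hs') as [X HX]. inversion HX; subst.
        -- match goal with H : root _ _ _ |- _ => inversion H; subst end.
           ++ destruct (pdn_lam_shape _ _ _ _ HP) as [B ->].
              exfalso; eapply HN; apply step_root; constructor.
           ++ destruct (pdn_lam_shape _ _ _ _ HP) as [B ->].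
              exfalso; eapply HN; apply step_root; constructor. eapply pdn_value; eauto.
        -- assert (~ snormal c P) by (intros Hc; eapply Hc; eauto).
           destruct (pdn_next _ _ _ _ HP HN1) as [[-> ->]|[P1 [a1 [-> [HP1 HP1']]]]].
           ++ exfalso; apply H; apply normal_snormal; auto.
           ++ eapply rt_trans; [apply rt_step, pd_surf, sstep_appl, pd_nsn; eauto|].
              apply (IHs a1 b); auto; lia.
        -- assert (~ snormal CBV Q) by (intros Hc; eapply Hc; eauto).
           destruct (pdn_next _ _ _ _ HQ HN2) as [[-> ->]|[Q1 [b1 [-> [HQ1 HQ1']]]]].
           ++ exfalso; apply H; apply normal_snormal; auto.
           ++ eapply rt_trans; [apply rt_step, pd_surf, sstep_appr, pd_nsn; eauto|].
              apply (IHs a b1); auto; lia.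
Qed.

Lemma F2_pdn0 c (Ps Ns : list tm) : Forall2 (pdn c 0) Ps Ns -> Ps = Ns.
Proof. induction 1; auto. inversion H; subst; f_equal; auto. Qed.

Lemma F2_pdnS c k (Ps Ns : list tm) : Forall2 (pdn c (S k)) Ps Ns ->
  exists Ps1, Forall2 (pd c) Ps Ps1 /\ Forall2 (pdn c k) Ps1 Ns.
Proof.
  induction 1. exists nil; split; constructor.
  destruct IHForall2 as [Ps1 [H1 H2]]. inversion H; subst.
  exists (M1 :: Ps1); split; constructor; auto.
Qed.

Lemma F2_pd_normal c (Ps Ps1 : list tm) : Forall2 (pd c) Ps Ps1 -> Forall (normal c) Ps -> Ps1 = Ps.
Proof.
  induction 1; intros HF; auto. inversion HF; subst. f_equal; auto. eapply pd_normal_eq; eauto.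
Qed.

Lemma op_comb c o : forall k (Ps Ns : list tm), Forall2 (pdn c k) Ps Ns -> Forall (normal c) Ns ->
  rt (pd c) (Op o Ps) (Op o Ns).
Proof.
  induction k; intros Ps Ns H HN.
  - rewrite (F2_pdn0 _ _ _ H); apply rt_refl.
  - destruct (F2_pdnS _ _ _ _ H) as [Ps1 [H1 H2]].
    destruct (classic (normal c (Op o Ps))) as [Hnm|Hnm].
    + rewrite (F2_pd_normal _ _ _ H1 (normal_op _ _ _ Hnm)) in H2. auto.
    + eapply rt_trans; [apply rt_step, pd_op; eauto|auto].
      intros X HX; inversion HX; subst; match goal with H : root _ _ _ |- _ => inversion H end.
Qed.

Lemma F2_pad_mono c k m (Ps Ns : list tm) : Forall2 (pdn c k) Ps Ns -> Forall (normal c) Ns ->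
  k <= m -> Forall2 (pdn c m) Ps Ns.
Proof.
  induction 1; intros HN Hkm; constructor; inversion HN; subst; auto. eapply pdn_pad; eauto.
Qed.

Lemma F2_pad c (Ps Ns : list tm) : Forall2 (rt (pd c)) Ps Ns -> Forall (normal c) Ns ->
  exists k, Forall2 (pdn c k) Ps Ns.
Proof.
  induction 1; intros HN. exists 0; constructor.
  inversion HN; subst. destruct (IHForall2 H4) as [k Hk]. destruct (rt_pdn _ _ _ H) as [n Hn].
  exists (max n k). constructor. eapply pdn_pad; eauto; lia.
  eapply F2_pad_mono; eauto; lia.
Qed.

Lemma stl_F2 c (Ps Ns : list tm) : stl c Ps Ns ->
  Forall (fun N => normal c N -> forall M, st c M N -> rt (pd c) M N) Ns ->
  Forall (normal c) Ns -> Forall2 (rt (pd c)) Ps Ns.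
Proof.
  induction 1; intros H1 H2; constructor; inversion H1; inversion H2; subst; auto.
Qed.

Lemma sstep_rt_pd c (M N : tm) : rt (sstep c) M N -> rt (pd c) M N.
Proof. apply rt_incl. intros; apply pd_surf; auto. Qed.

Lemma main_st c : forall N : tm, normal c N -> forall M, st c M N -> rt (pd c) M N.
Proof.
  induction N as [n|A IH|A1 A2 IH1 IH2|o ts IH] using term_ind'; intros HN M Hst;
    inversion Hst; subst.
  - apply sstep_rt_pd; auto.
  - eapply rt_trans; [apply sstep_rt_pd; eauto|].
    destruct (rt_pdn _ _ _ (IH (normal_lam _ _ HN) _ ltac:(eassumption))) as [k Hk].
    eapply lam_comb; eauto.
  - eapply rt_trans; [apply sstep_rt_pd; eauto|].
    destruct (normal_app _ _ _ HN) as [HN1 HN2].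
    destruct (rt_pdn _ _ _ (IH1 HN1 _ ltac:(eassumption))) as [a Ha].
    destruct (rt_pdn _ _ _ (IH2 HN2 _ ltac:(eassumption))) as [b Hb].
    eapply (app_comb c A1 A2 HN (a + b) a b); eauto.
  - eapply rt_trans; [apply sstep_rt_pd; eauto|].
    pose proof (normal_op _ _ _ HN) as HNs.
    destruct (F2_pad _ _ _ (stl_F2 _ _ _ ltac:(eassumption) IH HNs) HNs) as [k Hk].
    eapply op_comb; eauto.
Qed.

Lemma rt_one_step (R : tm -> tm -> Prop) (l l' : list tm) : Forall2 (rt R) l l' -> clos_refl_trans _ (one_step R) l l'.
Proof.
  induction 1. apply rt_refl.
  apply rt_trans with (y :: l).
  - clear IHForall2 H0. induction H. apply rt_step, one_hd; auto. apply rt_refl. eapply rt_trans; eauto.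
  - clear H H0. induction IHForall2. apply rt_step, one_tl; auto. apply rt_refl. eapply rt_trans; eauto.
Qed.

Lemma rt_op c o (l l' : list tm) : Forall2 (rt (step c)) l l' -> rt (step c) (Op o l) (Op o l').
Proof.
  intros H. apply rt_one_step in H. induction H. apply rt_step, step_op; auto. apply rt_refl. eapply rt_trans; eauto.
Qed.

Fixpoint pd_rt c (M M' : tm) (H : pd c M M') {struct H} : rt (step c) M M'.
Proof.
  destruct H.
  - apply rt_step, sstep_step; auto.
  - apply rt_refl.
  - apply (rt_map (@Lam O) (step c) (step c)); [intros; apply step_lam; auto | apply pd_rt; auto].
  - eapply rt_trans.
    + apply (rt_map (fun x => App x P2) (step c) (step c)); [intros; apply step_appl; auto | apply pd_rt; exact H1].
    + apply (rt_map (fun x => App P1' x) (step c) (step c)); [intros; apply step_appr; auto | apply pd_rt; exact H2].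
  - apply rt_op. clear H H0. revert Ps Ps' H1. fix F 3. intros l l' h. destruct h as [|a b la lb ha hb]; constructor.
    + apply pd_rt; exact ha.
    + apply F; exact hb.
Qed.

End S.

Theorem mainTheorem15 (O : Type) (ar : O -> nat) (c : calculus) (M N : term O) :
  wf ar M -> wf ar N -> normal c N ->
  (clos_refl_trans _ (step c) M N <-> clos_refl_trans _ (pd c) M N).
Proof.
  intros _ _ HN; split; intros H.
  - apply main_st; auto. apply rt_step_st; auto.
  - clear HN. induction H. apply pd_rt; auto. apply rt_refl. eapply rt_trans; eauto.
Qed.
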